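(* Let $A$ be an invertible upper-triangular real $d\times d$ matrix and $\Sigma$ a real diagonal $d\times d$ matrix. Then $${\rm Low}(A\otimes A^{-T})(1\otimes\Sigma-\Sigma\otimes1)(A^{-1}\otimes A^T){\rm Low}={\rm Low}(A\otimes A^{-T}){\rm Low}(1\otimes\Sigma-\Sigma\otimes1){\rm Low}(A^{-1}\otimes A^T){\rm Low}.$$
   Context: $\otimes$ is the Kronecker product, $1$ the identity, $A^{-T}=(A^{-1})^T$. ${\rm Low}\in\{0,1\}^{d^2\times d^2}$ is the diagonal matrix such that ${\rm Low}\,{\rm vec}(B)={\rm vec}({\rm low}(B))$ for all $B$, where ${\rm vec}$ is column-wise vectorization and ${\rm low}(B)$ is the strictly lower-triangular part of $B$. *)

(* Defs.v *)
(* Kronecker product: tensmx (notation A *t B) from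
   mathcomp-real-closed's mxtens.v, with (A *t B) (i*p+j) (k*q+l) = A i k * B j l. *)
From mathcomp Require Import all_boot all_order all_algebra.
From mathcomp Require Export mxtens.
Set Implicit Arguments. Unset Strict Implicit. Unset Printing Implicit Defensive.
Import GRing.Theory Num.Theory.
Local Open Scope ring_scope.

(* column-wise vectorization: entry (i,j) of B sits at index j*d + i,
   i.e. at mxtens_index (j, i). *)
Definition vecc {R : pzRingType} {d : nat} (B : 'M[R]_d) : 'cV[R]_(d * d) :=
  \col_k B (mxtens_unindex k).2 (mxtens_unindex k).1.

Definition low {R : pzRingType} {d : nat} (B : 'M[R]_d) : 'M[R]_d :=
  \matrix_(i, j) (if (j < i)%N then B i j else 0).

(* Low : diagonal 0/1 matrix selecting the strictly-lower entries in vecc *)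
Definition Low {R : pzRingType} (d : nat) : 'M[R]_(d * d) :=
  \matrix_(k, l) (if (k == l) && ((mxtens_unindex k).1 < (mxtens_unindex k).2)%N
                  then 1 else 0).

Lemma Low_vecc {R : pzRingType} {d : nat} (B : 'M[R]_d) :
  Low d *m vecc B = vecc (low B).
Proof.
apply/matrixP=> k l; rewrite !mxE (bigD1 k) //= big1 ?addr0.
  by rewrite !mxE eqxx /=; case: ifP; rewrite ?mul1r ?mul0r.
by move=> i /negbTE ik; rewrite !mxE eq_sym ik /= mul0r.
Qed.

(* Main.v *)
Require Import Defs.
From mathcomp Require Import all_boot all_order all_algebra.
From mathcomp Require Import mxtens.
Import GRing.Theory Num.Theory.
Local Open Scope ring_scope.

Lemma inv_upper (R : fieldType) (d : nat) (A : 'M[R]_d)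
  (hAinv : A \in unitmx)
  (hAup : forall i j : 'I_d, (j < i)%N -> A i j = 0) :
  forall i j : 'I_d, (j < i)%N -> invmx A i j = 0.
Proof.
have hT : is_trig_mx A^T by apply/is_trig_mxP => i j ij; rewrite mxE hAup.
have hdiag : forall k : 'I_d, A k k != 0.
  move=> k; move: hAinv; rewrite unitmxE -det_tr det_trig // unitfE.
  by rewrite (bigD1 k) //= mulf_eq0 negb_or mxE => /andP[].
move=> p k; suff H : forall n (k : 'I_d), (k < n)%N -> (k < p)%N -> invmx A p k = 0.
  by apply: H (ltnSn k).
elim=> [//|n IH] {}k hk kp.
have := congr1 (fun M : 'M[R]_d => M p k) (mulVmx hAinv).
rewrite !mxE (bigD1 k) //= big1 ?addr0.
  have -> : (p == k) = false by apply/negbTE; rewrite -(inj_eq val_inj) /= gtn_eqF.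
  idtac.
  move=> /eqP; rewrite mulf_eq0 (negbTE (hdiag k)) orbF => /eqP //.
move=> j jk; case: (ltngtP k j) => kj.
+ by rewrite hAup ?mulr0.
+ rewrite IH ?mul0r //; last exact: ltn_trans kj kp.
  by rewrite (leq_trans kj _).
+ by move: jk; rewrite -(inj_eq val_inj) /= kj eqxx.
Qed.

Definition lowi {d} (x : 'I_(d*d)) : bool :=
  ((mxtens_unindex x).1 < (mxtens_unindex x).2)%N.

Lemma LowE {R : pzRingType} d (x y : 'I_(d*d)) :
  (Low d : 'M[R]_(d*d)) x y = if (x == y) && lowi x then 1 else 0.
Proof. by rewrite mxE. Qed.

Lemma mulLowl {R : pzRingType} d n (X : 'M[R]_(d*d, n)) x y :
  (Low d *m X) x y = if lowi x then X x y else 0.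
Proof.
rewrite mxE (bigD1 x) //= big1 ?addr0.
  by rewrite LowE eqxx /=; case: ifP; rewrite ?mul1r ?mul0r.
by move=> i /negbTE ix; rewrite LowE eq_sym ix mul0r.
Qed.

Lemma mulLowr {R : pzRingType} d n (X : 'M[R]_(n, d*d)) x y :
  (X *m Low d) x y = if lowi y then X x y else 0.
Proof.
rewrite mxE (bigD1 y) //= big1 ?addr0.
  by rewrite LowE eqxx /=; case: ifP; rewrite ?mulr1 ?mulr0.
by move=> i /negbTE ix; rewrite LowE ix mulr0.
Qed.

Lemma muldiagl {R : pzRingType} m n (D : 'M[R]_m) (X : 'M[R]_(m, n)) x y :
  is_diag_mx D -> (D *m X) x y = D x x * X x y.
Proof.
move=> /is_diag_mxP hD; rewrite mxE (bigD1 x) //= big1 ?addr0 //.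
by move=> i ix; rewrite hD ?mul0r // eq_sym.
Qed.

Lemma muldiagr {R : pzRingType} m n (D : 'M[R]_n) (X : 'M[R]_(m, n)) x y :
  is_diag_mx D -> (X *m D) x y = X x y * D y y.
Proof.
move=> /is_diag_mxP hD; rewrite mxE (bigD1 y) //= big1 ?addr0 //.
by move=> i ix; rewrite hD ?mulr0.
Qed.

Theorem lemma7 (R : realFieldType) (d : nat) (A Sig : 'M[R]_d)
  (hAinv : A \in unitmx)
  (hAup : forall i j : 'I_d, (j < i)%N -> A i j = 0)
  (hSdiag : is_diag_mx Sig) :
  Low d *m (A *t (invmx A)^T) *m ((1%:M : 'M[R]_d) *t Sig - Sig *t (1%:M : 'M[R]_d))
    *m (invmx A *t A^T) *m Low d
  = Low d *m (A *t (invmx A)^T) *m Low d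
    *m ((1%:M : 'M[R]_d) *t Sig - Sig *t (1%:M : 'M[R]_d)) *m Low d
    *m (invmx A *t A^T) *m Low d.
Proof.
set D := (_ *t Sig - _).
have hS := hSdiag; move/is_diag_mxP: hS => hS.
have hD : is_diag_mx D.
  apply/is_diag_mxP => x y.
  case: (mxtens_indexP x) => p q; case: (mxtens_indexP y) => k l hne.
  rewrite !mxE !mxtens_indexK /=.
  case: (eqVneq p k) => [pk|pk]; case: (eqVneq q l) => [ql|ql].
  - by move: hne; rewrite pk ql eqxx.
  - by rewrite pk (hS _ _ ql) (_ : false%:R = 0) // !mulr0 subrr.
  - by rewrite -ql (hS _ _ pk) (_ : false%:R = 0) // !mul0r subrr.
  - by rewrite (_ : false%:R = 0) // mul0r mulr0 subrr.
have hinv := @inv_upper _ _ A hAinv hAup.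
have key : D *m ((invmx A *t A^T) *m Low d)
    = Low d *m (D *m (Low d *m ((invmx A *t A^T) *m Low d))).
  apply/matrixP => x y.
  rewrite muldiagl // mulLowr mulLowl muldiagl // mulLowl mulLowr.
  case hx: (lowi x); first by case: (lowi y).
  case hy: (lowi y); last by rewrite mulr0.
  move: hx hy; case: (mxtens_indexP x) => p q; case: (mxtens_indexP y) => k l.
  rewrite /lowi !mxtens_indexK /= => /negbT hx hy.
  rewrite -leqNgt in hx.
  rewrite !mxE !mxtens_indexK /=.
  case: (eqVneq p q) => [pq|pq].
    by rewrite pq eqxx mul1r mulr1 subrr mul0r.
  have qp : (q < p)%N by rewrite ltn_neqAle hx andbT; apply: contra pq => /eqP h; apply/eqP; apply: val_inj.
  case: (ltnP q l) => ql.
    by rewrite hAup // !mulr0.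
  by rewrite hinv ?mul0r ?mulr0 // (ltn_trans hy (leq_ltn_trans ql qp)).
by rewrite -!mulmxA key.
Qed.
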